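(* Let $M_1,\dots,M_m$ generate the measured stabilizer group, let $\mathcal C^*$ be the set of nontrivial syndrome classes and, for each class $C$, let $J(C)\subseteq[m]$ be the set of indices of generators anticommuting with the errors of $C$. Suppose real numbers $(X_C)_{C\in\mathcal C^*}$ and $(Y_R)_{R\subseteq[m]}$ satisfy the linear system $$Y_R=\sum_{C\in\mathcal C^*}D_{R,C}X_C\quad\text{for all }R\in\mathcal R,\qquad D_{R,C}=\begin{cases}1&|R\cap J(C)|\text{ odd}\\0&|R\cap J(C)|\text{ even,}\end{cases}$$ where $\mathcal R=\bigcup_{C\in\mathcal C^*}\{R:R\subseteq J(C)\}$ (equivalently, the system $\log\vec\Lambda^{(\mathcal M')}=D'^{(\mathcal M')}\log\vec\nu$ with $X_C=\log\nu_C$, $Y_R=\log\Lambda(\prod_{i\in R}M_i)$, restricted to $\mathcal M'=\bigcup_{C}\{\prod_{i\in J'}M_i:J'\subseteq J(C)\}$). Then for every $C\in\mathcal C^*$, $$X_C=-\sum_{C'\in\mathcal C,\ J(C')\supsetneq J(C)}X_{C'}+\frac{1}{2^{|J(C)|-1}}\sum_{S\subseteq J(C)}(-1)^{|S|-1}Y_S,$$ so that this recursion solves the system.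
   Context: Setting: $n$-qubit Pauli operators without phases; a stabilizer code with measured subgroup $\mathcal M=\langle M_1,\dots,M_m\rangle$; a finite set $\mathcal E_\Gamma$ of local Pauli errors partitioned into syndrome classes according to which generators each error anticommutes with (errors in a class share the same set $J(C)$; distinct classes have distinct sets; the trivial class $C_0$ has $J(C_0)=\emptyset$, and $\mathcal C=\mathcal C^*\cup\{C_0\}$). The row of $D'$ for the stabilizer element $\prod_{i\in R}M_i$ and the column for class $C$ is the binary commutator of that element with any error of $C$, which equals $D_{R,C}$ above. In the application, $\nu_C$ is the learnable transformed eigenvalue of class $C$ and $\Lambda(M)$ the syndrome expectation value of $M$. *)

(* Defs.v *)
From HB Require Import structures.
From mathcomp Require Import all_boot all_order all_algebra.
From mathcomp Require Import reals.
Set Implicit Arguments. Unset Strict Implicit. Unset Printing Implicit Defensive.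
Import Order.TTheory GRing.Theory Num.Theory.
Local Open Scope ring_scope.

Definition Dentry (R : realType) (m : nat) (S J : {set 'I_m}) : R :=
  (odd #|S :&: J|)%:R.

(* Main.v *)
Require Import Defs.
From HB Require Import structures.
From mathcomp Require Import all_boot all_order all_algebra.
From mathcomp Require Import reals.
From mathcomp Require Import ring lra.
Set Implicit Arguments. Unset Strict Implicit. Unset Printing Implicit Defensive.
Import Order.TTheory GRing.Theory Num.Theory.
Local Open Scope ring_scope.

Definition tog m (x : 'I_m) (S : {set 'I_m}) := if x \in S then S :\ x else x |: S.

Lemma togK m (x : 'I_m) : involutive (tog x).
Proof.
move=> S; rewrite /tog; case xS: (x \in S).
  by rewrite setD11 setD1K.
by rewrite setU11 setU1K // xS.
Qed.

Lemma tog_sub m (x : 'I_m) (T S : {set 'I_m}) : x \in T -> (tog x S \subset T) = (S \subset T).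
Proof.
move=> xT; rewrite /tog; case: ifP => xS.
  apply/idP/idP => H; last by apply: subset_trans H; apply: subD1set.
  apply/subsetP => y yS; case: (y =P x) => [->//|/eqP ne].
  by apply: (subsetP H); rewrite !inE ne yS.
by rewrite subUset sub1set xT.
Qed.

Lemma tog_sign (R : realType) m (x : 'I_m) (B S : {set 'I_m}) : x \in B ->
  (-1) ^+ #|tog x S :&: B| = - ((-1) ^+ #|S :&: B|) :> R.
Proof.
move=> xB; rewrite /tog; case: ifP => xS.
  have -> : (S :\ x) :&: B = (S :&: B) :\ x.
    by apply/setP => y; rewrite !inE andbA.
  by rewrite (cardsD1 x (S :&: B)) !inE xS xB /= exprS mulN1r opprK.
have -> : (x |: S) :&: B = x |: (S :&: B).
  apply/setP => y; rewrite !inE; case: eqP => // ->; by rewrite xB.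
by rewrite cardsU1 !inE xS /= exprS mulN1r.
Qed.

Lemma sum_zero (R : realType) m (x : 'I_m) (T B : {set 'I_m}) : x \in T -> x \in B ->
  \sum_(S : {set 'I_m} | S \subset T) (-1) ^+ #|S :&: B| = 0 :> R.
Proof.
move=> xT xB.
have inj : injective (tog x) by apply: inv_inj; apply: togK.
set s := (X in X = _).
have : s = - s.
  rewrite {1}/s (reindex_inj inj) /= -sumrN; apply: eq_big => S; first by rewrite tog_sub.
  by move=> _; rewrite tog_sign.
move=> h; lra.
Qed.

Lemma odd_R (R : realType) n : (odd n)%:R = (1 - (-1) ^+ n) / 2 :> R.
Proof. by rewrite -signr_odd; case: odd => /=; rewrite ?expr0 ?expr1; by field. Qed.

Lemma key (R : realType) m (T K : {set 'I_m}) : T != set0 ->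
  \sum_(S : {set 'I_m} | S \subset T) (- (-1) ^+ #|S|) * Dentry R S K
  = if T \subset K then 2%:R ^+ (#|T|.-1) else 0.
Proof.
move=> Tn0.
have [x xT] : exists x, x \in T by apply/set0Pn.
have E : forall S : {set 'I_m}, (- (-1) ^+ #|S|) * Dentry R S K
     = (- (-1) ^+ #|S :&: setT| + (-1) ^+ #|S :&: ~: K|) / 2.
  move=> S; rewrite /Dentry odd_R setIT -setDE.
  have h : (-1) ^+ #|S| * (-1) ^+ #|S :&: K| = (-1) ^+ #|S :\: K| :> R.
    rewrite -(cardsID K S) exprD mulrAC -expr2 -exprM mulnC exprM sqrrN !expr1n mul1r //.
  rewrite -h; ring.
rewrite (eq_bigr _ (fun S _ => E S)) -mulr_suml big_split /= sumrN.
rewrite (sum_zero R xT (in_setT x)) oppr0 add0r.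
case: ifP => TK.
  rewrite (eq_bigr (fun _ => 1)); last first.
    move=> S ST; rewrite -setDE.
    have -> : S :\: K = set0.
      apply/eqP; rewrite setD_eq0; exact: subset_trans ST TK.
    by rewrite cards0 expr0.
  rewrite sumr_const.
  have -> : #|[pred S : {set 'I_m} | S \subset T]| = #|powerset T|.
    by apply: eq_card => S; rewrite !inE.
  rewrite card_powerset.
  have : (0 < #|T|)%N by rewrite card_gt0.
  case: #|T| => // n _ /=; by rewrite natrX exprS; field.
have [y yTK] : exists y, y \in T :\: K.
  apply/set0Pn; by rewrite setD_eq0 TK.
move: yTK; rewrite inE => /andP [yK yT].
by rewrite (sum_zero R yT (_ : y \in ~: K)) ?mul0r // inE.
Qed.

Theorem lemma16 (R : realType) (m : nat) (Cls : finType)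
    (J : Cls -> {set 'I_m})
    (J_inj : injective J)
    (J_nontriv : forall C : Cls, J C != set0)
    (X : Cls -> R) (Y : {set 'I_m} -> R)
    (hsys : forall S : {set 'I_m}, (exists C : Cls, S \subset J C) ->
              Y S = \sum_(C : Cls) Dentry R S (J C) * X C) :
  forall C : Cls,
    X C = - (\sum_(C' : Cls | J C \proper J C') X C')
          + (2%:R ^+ (#|J C|.-1))^-1
            * \sum_(S : {set 'I_m} | S \subset J C) (- (-1) ^+ #|S|) * Y S.
Proof.
move=> C.
have Tn0 := J_nontriv C.
have step : \sum_(S : {set 'I_m} | S \subset J C) (- (-1) ^+ #|S|) * Y S
   = (\sum_(C' : Cls | J C \subset J C') X C') * 2%:R ^+ (#|J C|.-1).
  transitivity (\sum_(S : {set 'I_m} | S \subset J C) \sum_(C' : Cls)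
                  (- (-1) ^+ #|S|) * Dentry R S (J C') * X C').
    apply: eq_bigr => S ST; rewrite (hsys S (ex_intro _ C ST)) mulr_sumr.
    by apply: eq_bigr => C' _; rewrite mulrA.
  rewrite exchange_big /= mulr_suml [RHS]big_mkcond /=; apply: eq_bigr => C' _.
  rewrite -mulr_suml key //.
  by case: ifP; rewrite ?mulr0 ?mul0r // mulrC.
rewrite step.
have E2 : \sum_(i | (J C \subset J i) && (i != C)) X i = \sum_(C' | J C \proper J C') X C'.
  apply: eq_bigl => C'; rewrite properEneq andbC; congr (_ && _).
  by rewrite (inj_eq J_inj) eq_sym.
have E3 : \sum_(C' | J C \subset J C') X C' = X C + \sum_(C' | J C \proper J C') X C'.
  by rewrite (bigD1 C) ?subxx //= E2.
rewrite E3.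
have p0 : (2%:R ^+ (#|J C|.-1) : R) != 0 by rewrite expf_neq0 // pnatr_eq0.
by field.
Qed.
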